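(* Let $X,Y,T$ be cellular spaces with $X$ and $T$ compact, let $r\ge0$, and let $a,b\colon X\to Y$ be maps with $a\overset{r}{\approx}b$. Then the maps $a\wedge\mathrm{id}_T,\ b\wedge\mathrm{id}_T\colon X\wedge T\to Y\wedge T$ satisfy $a\wedge\mathrm{id}_T\overset{r}{\approx}b\wedge\mathrm{id}_T$.
   Context: Cellular space = based CW complex; maps based. Strong similarity: $\langle W\rangle$ = free abelian group on a set $W$. $Y^X$ = based maps (compact-open), based at the constant map; $Y^X_a$ = path component of $a$; $V\mapsto V|_R$ restriction; $\mathcal F_n(X)$ = finite $R\subseteq X$ containing the basepoint with $|R|\le n+1$; $\langle Y^X\rangle^{(s)}=\{V:V|_R=0\ \forall R\in\mathcal F_{s-1}(X)\}$. For unbased $U,V$: $V^{(U)}$ = unbased maps; $\Xi^U(v)$ = constant map at $v$; for $U=\coprod_iU_i$ the combining product $\boxed{\sqcup}_i\langle w_i\rangle=\langle w\rangle$, $w|_{U_i}=w_i$, multilinear. For nonempty finite $E$: simplex $\Delta E$, faces $\Delta F$; layouts = sets $A$ of pairwise disjoint nonempty subsets; $\Delta[A]=\coprod_{F\in A}\Delta F$; $S\in\langle V^{(\Delta E)}\rangle$ fissile if $S|_{\Delta[A]}=\boxed{\sqcup}_{F\in A}S|_{\Delta F}$ for all layouts. $U\wr X=(U\times X)/(U\times\{x_0\})$, $\#^X(w)(u\wr x)=w(u)(x)$, $\langle (Y^X)^{(U)}\rangle^{(s)}_X=\langle\#^X\rangle^{-1}\langle Y^{U\wr X}\rangle^{(s)}$.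 $a\overset{r}{\approx}b$ iff for each nonempty finite $E$ there is a fissile $S\in\langle (Y^X_a)^{(\Delta E)}\rangle$ with $\langle\Xi^{\Delta E}(b)\rangle-S\in\langle (Y^X)^{(\Delta E)}\rangle^{(r+1)}_X$. *)

(* Defs.v *)
From HB Require Import structures.
From mathcomp Require Import all_boot all_order all_algebra generic_quotient.
From mathcomp Require Import all_classical all_reals all_analysis.
From mathcomp Require Import Rstruct Rstruct_topology.

Set Implicit Arguments.
Unset Strict Implicit.
Unset Printing Implicit Defensive.

Import Order.TTheory GRing.Theory Num.Theory.
Local Open Scope classical_set_scope.
Local Open Scope ring_scope.
Local Open Scope quotient_scope.

Notation RR := Rdefinitions.R.

(* Cellular spaces = based CW complexes (Hatcher, Prop. A.2).          *)

Definition cl_disk (n : nat) : set 'rV[RR]_n :=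
  [set v | \sum_(i < n) v ord0 i ^+ 2 <= 1].
Definition open_disk (n : nat) : set 'rV[RR]_n :=
  [set v | \sum_(i < n) v ord0 i ^+ 2 < 1].
Definition sphere (n : nat) : set 'rV[RR]_n :=
  [set v | \sum_(i < n) v ord0 i ^+ 2 = 1].
Arguments cl_disk : clear implicits.
Arguments open_disk : clear implicits.
Arguments sphere : clear implicits.

Definition cellular (X : ptopologicalType) : Prop :=
  hausdorff_space X /\
  exists (I : Type) (d : I -> nat) (Phi : forall i, 'rV[RR]_(d i) -> X),
    [/\ (forall i, continuous (from_subspace (cl_disk (d i)) (Phi i))),
        ((forall i u v, open_disk (d i) u -> open_disk (d i) v ->
            Phi i u = Phi i v -> u = v) /\
         (forall x : X, exists! i, exists2 u, open_disk (d i) u & Phi i u = x)),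
        (forall i, exists J : seq I,
            (forall j, List.In j J -> (d j < d i)%N) /\
            (forall u, sphere (d i) u ->
               exists j, List.In j J /\ exists2 v, open_disk (d j) v &
                 Phi j v = Phi i u)),
        (forall A : set X, closed A <->
            forall i, closed (A `&` closure (Phi i @` open_disk (d i))))
      & exists i, d i = 0%N /\ Phi i @` open_disk (d i) = [set point]].

Section Smash.
Variables (X T : ptopologicalType).

Definition in_wedge (p : X * T) : Prop := p.1 = point \/ p.2 = point.

Definition smash_rel : rel (X * T) :=
  fun p q => `[< p = q \/ (in_wedge p /\ in_wedge q) >].

Lemma smash_rel_refl : reflexive smash_rel.
Proof. by move=> p; apply/asboolP; left. Qed.

Lemma smash_rel_sym : symmetric smash_rel.
Proof.
move=> p q; apply/asboolP/asboolP => -[->|[]]; by [left | right].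
Qed.

Lemma smash_rel_trans : transitive smash_rel.
Proof.
move=> q p s /asboolP [->//|[wp wq]] /asboolP [<-|[_ ws]];
  apply/asboolP; right; by split.
Qed.

Canonical smash_equiv := EquivRel smash_rel smash_rel_refl smash_rel_sym
  smash_rel_trans.

Definition smash := {eq_quot smash_equiv}.
HB.instance Definition _ := Topological.copy smash (quotient_topology smash).
HB.instance Definition _ := Quotient.on smash.
HB.instance Definition _ :=
  isPointed.Build smash (\pi_smash (point : X * T)).

End Smash.

Definition smash_map (X Y T : ptopologicalType) (f : X -> Y) :
    smash X T -> smash Y T :=
  fun q => \pi_(smash Y T) (f (repr q).1, (repr q).2).
Arguments smash_map {X Y} T f _.

Section Approx.
Variables (X Y : ptopologicalType).

Definition bmap (f : X -> Y) : Prop := continuous f /\ f point = point.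

Definition unit_interval : set RR := [set t | 0 <= t <= 1].

Definition path_comp (a : X -> Y) : set {compact-open, X -> Y} :=
  [set f | exists g : RR -> {compact-open, X -> Y},
     [/\ continuous (from_subspace (unit_interval) g), g 0 = a, g 1 = f
       & forall t, unit_interval t -> bmap (g t)]].

Definition face (E : finType) (F : {set E}) : set {ptws E -> RR} :=
  [set p | [/\ forall e, 0 <= p e, \sum_(e : E) p e = 1
             & forall e, e \notin F -> p e = 0]].

Definition simplex (E : finType) := set_type (face [set: E]).

Definition faceD (E : finType) (F : {set E}) : set (simplex E) :=
  [set p | face F (set_val p)].

(* candidate generators of < (Y^X)^(Delta E) > : functions Delta E -> Y^X *)
Definition gen (E : finType) := simplex E -> {compact-open, X -> Y}.

Definition is_map_into (E : finType) (W : set (X -> Y)) (w : gen E) : Prop :=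
  continuous w /\ forall p, W (w p).

(* formal Z-linear combinations: finitely supported coefficient functions *)
Definition fin_supp (M : Type) (S : M -> int) : Prop :=
  finite_set [set w | S w != 0].

Definition supported_in (M : Type) (P : set M) (S : M -> int) : Prop :=
  forall w, S w != 0 -> P w.

Definition csum (M : choiceType) (S : M -> int) (P : set M) : int :=
  \sum_(w \in P) S w.

Definition agree_on (E : finType) (D : set (simplex E)) (w w' : gen E) :=
  forall p, D p -> w p = w' p.

Definition layout (E : finType) (A : {set {set E}}) : Prop :=
  (forall F, F \in A -> F != finset.set0) /\
  (forall F G, F \in A -> G \in A -> F != G -> F :&: G = finset.set0).

(* S is fissile: for every layout A and every generator g of
   <W^(Delta[A])> (a map defined on the disjoint union of the faces),
   coefficient of g in S|_{Delta[A]} = coefficient of g in the combining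
   product of the S|_{Delta F}, F in A. *)
Definition fissile (E : finType) (W : set (X -> Y)) (S : gen E -> int) :=
  forall A : {set {set E}}, layout A ->
  forall g : gen E,
    (forall F, F \in A ->
       continuous (from_subspace (faceD F) g) /\ forall p, faceD F p -> W (g p)) ->
    csum S [set w | forall F, F \in A -> agree_on (faceD F) w g] =
    \prod_(F in A) csum S [set w | agree_on (faceD F) w g].

(* V lies in < (Y^X)^(Delta E) >^(s)_X : for every finite R in the half
   smash Delta E |x X containing the basepoint with |R| <= s, the
   restriction to R of <#^X>(V) vanishes.  R is given by the list l of its
   non-base points u |x x (x <> basepoint), so |R| = 1 + #l <= s. *)
Definition in_filt (E : finType) (s : nat) (V : gen E -> int) : Prop :=
  forall l : seq (simplex E * X),
    (size l < s)%N -> (forall ux, List.In ux l -> ux.2 <> point) ->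
    forall w0 : gen E,
      csum V [set w | forall ux, List.In ux l -> w ux.1 ux.2 = w0 ux.1 ux.2]
      = 0.

Definition ind (M : Type) (w0 w : M) : int := if pselect (w = w0) then 1 else 0.

Definition r_approx (r : nat) (a b : X -> Y) : Prop :=
  forall E : finType, (0 < #|E|)%N ->
  exists S : gen E -> int,
    [/\ fin_supp S, supported_in (is_map_into (path_comp a)) S,
        fissile (path_comp a) S
      & in_filt r.+1 (fun w => ind (fun _ => b) w - S w)].

End Approx.

(* Main.v *)
Require Import Defs.
From HB Require Import structures.
From mathcomp Require Import all_boot all_order all_algebra generic_quotient.
From mathcomp Require Import all_classical all_reals all_analysis.
From mathcomp Require Import Rstruct Rstruct_topology.
Set Implicit Arguments.
Unset Strict Implicit.
Unset Printing Implicit Defensive.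
Local Open Scope classical_set_scope.
Local Open Scope quotient_scope.
Import Order.TTheory GRing.Theory Num.Theory.

Section SmashFacts.
Variables (X T : ptopologicalType).
Local Notation pi := (\pi_(smash X T)).

Lemma pi_rel (p q : X * T) : pi p = pi q -> smash_rel p q.
Proof. by move/eqmodP. Qed.

Lemma rel_pi (p q : X * T) : smash_rel p q -> pi p = pi q.
Proof. by move=> h; apply/eqmodP. Qed.

Lemma rel_nonwedge (p q : X * T) : smash_rel p q -> ~ in_wedge p -> p = q.
Proof. by move/asboolP => [//|[]]. Qed.

Lemma wedge_rel (p q : X * T) : in_wedge p -> in_wedge q -> smash_rel p q.
Proof. by move=> wp wq; apply/asboolP; right. Qed.

Lemma repr_rel (p : X * T) : smash_rel p (repr (pi p)).
Proof. by apply: pi_rel; rewrite reprK. Qed.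

Lemma point_wedge : in_wedge (point : X * T).
Proof. by left. Qed.

Lemma repr_wedge (q : smash X T) : in_wedge (repr q) <-> q = point.
Proof.
split.
  move=> w; rewrite -[q]reprK; apply: rel_pi; exact: wedge_rel w point_wedge.
move=> ->; have := repr_rel (point : X * T).
by move/asboolP => [<-|[_ //]]; exact: point_wedge.
Qed.

Lemma pi_wedge (p : X * T) : in_wedge p -> pi p = point.
Proof. by move=> w; apply: rel_pi; exact: wedge_rel w point_wedge. Qed.

Lemma pi_inj_snd (y y' : X) (t : T) : t <> point -> pi (y, t) = pi (y', t) -> y = y'.
Proof.
move=> tn /pi_rel /asboolP [[]//|[[/= ->|//] [/= ->|//]]] //.
Qed.

End SmashFacts.
Section SmashCont.
Variables (X Y T : ptopologicalType) (Z : topologicalType) (H : Z -> X -> Y).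
Local Notation F := (fun zq : Z * smash X T => smash_map T (H zq.1) zq.2).

Lemma sat_nbhs (z0 : Z) (q0 : smash X T) (U : set (smash Y T)) (N : set Z) (O : set (X * T)) :
  nbhs z0 N -> open O -> (forall p p', O p -> smash_rel p p' -> O p') ->
  O (repr q0) ->
  (forall z p, N z -> O p -> U (\pi_(smash Y T) (H z p.1, p.2))) ->
  nbhs (z0, q0) (F @^-1` U).
Proof.
move=> Nz0 oO satO Oq0 hU.
exists (N, \pi_(smash X T) @` O) => /=.
  split => //; apply: open_nbhs_nbhs; split; last first.
    by exists (repr q0) => //; rewrite reprK.
  suff h : open (\pi_(smash X T) @^-1` (\pi_(smash X T) @` O)) by exact: h.
  have -> : \pi_(smash X T) @^-1` (\pi_(smash X T) @` O) = O.
    rewrite eqEsubset; split => p /=; last by move=> Op; exists p.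
    by case=> p' Op' h; apply: satO Op' _; apply: pi_rel.
  exact: oO.
case=> z q /= [Nz [p Op <-]]; rewrite /smash_map; apply: hU => //.
by apply: satO Op _; exact: repr_rel.
Qed.
End SmashCont.
Lemma openX' (U V : topologicalType) (A : set U) (B : set V) :
  open A -> open B -> open (A `*` B).
Proof.
move=> oA oB; rewrite openE => -[a b] [/= Aa Bb].
exists (A, B) => //=; split; apply: open_nbhs_nbhs; by split.
Qed.

Section SmashCont2.
Variables (X Y T : ptopologicalType) (Z : topologicalType) (H : Z -> X -> Y).
Hypotheses (cH : continuous (fun zx : Z * X => H zx.1 zx.2)).

Lemma extract_nbhs (W : set (Y * T)) z0 x t : open W -> W (H z0 x, t) ->
  exists N P B, [/\ nbhs z0 N, nbhs x P, nbhs t B &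
    forall z x' t', N z -> P x' -> B t' -> W (H z x', t')].
Proof.
move=> oW Wx.
have : nbhs (H z0 x, t) W by apply: open_nbhs_nbhs.
case=> -[A B] /= [Ay Bt] ABW.
have : nbhs (z0, x) ((fun zx : Z * X => H zx.1 zx.2) @^-1` A) := @cH (z0, x) A Ay.
case=> -[N P] /= [Nz Px] NPA.
exists N, P, B; split => // z x' t' Nz' Px' Bt'.
by apply: ABW; split => //=; apply: (NPA (z, x')).
Qed.
End SmashCont2.
Section SmashCont3.
Variables (X Y T : ptopologicalType) (Z : topologicalType) (H : Z -> X -> Y).

Lemma smash_cont : hausdorff_space X -> hausdorff_space T ->
  compact [set: X] -> compact [set: T] ->
  continuous (fun zx : Z * X => H zx.1 zx.2) ->
  (forall z, H z point = point) ->
  continuous (fun zq : Z * smash X T => smash_map T (H zq.1) zq.2).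
Proof.
move=> hX hT cX cT cH Hb [z0 q0] U /=.
rewrite nbhsE => -[U' [oU' U'q] U'U].
rewrite nbhs_simpl /=.
apply: (@filterS _ _ _ ((fun zq : Z * smash X T => smash_map T (H zq.1) zq.2) @^-1` U')).
  by move=> ? /U'U.
pose W := \pi_(smash Y T) @^-1` U'.
have oW : open W by exact: oU'.
have cl1 (S : ptopologicalType) : hausdorff_space S -> open (~` [set (point : S)]).
  by move=> hS; apply: closed_openC; apply: accessible_closed_set1; exact: hausdorff_accessible.
case: (pselect (in_wedge (repr q0))) => wq0.
- have Wwedge : forall p, in_wedge p -> W p.
    move=> p wp; rewrite /W /= pi_wedge //.
    move: U'q; rewrite /smash_map pi_wedge //.
    by case: wq0 => [->|->]; [left; rewrite Hb | right].
  have [[N1 Q1] [/= N1z Q1t] hQ] : nbhs (z0, point : T)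
      (fun i : Z * T => forall x, setT x -> W (H i.1 x, i.2)).
    move/compact_near_coveringP : cX => /(_ (Z * T)%type (nbhs (z0, point : T)) (fun i x => W (H i.1 x, i.2))); apply.
    move=> x _.
    have [N [P [B [Nz Px Bt hW]]]] := extract_nbhs cH oW
      (Wwedge (H z0 x, point) (or_intror erefl)).
    exists (P, N `*` B) => /=; first by split => //; exists (N, B).
    by case=> x' [z t] /= [Px' [Nz' Bt']]; exact: hW.
  have [[N2 P2] [/= N2z P2x] hP] : nbhs (z0, point : X)
      (fun i : Z * X => forall t, setT t -> W (H i.1 i.2, t)).
    move/compact_near_coveringP : cT => /(_ (Z * X)%type (nbhs (z0, point : X)) (fun i t => W (H i.1 i.2, t))); apply.
    move=> t _.
    have [N [P [B [Nz Px Bt hW]]]] := extract_nbhs cH oW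
      (Wwedge (H z0 point, t) (or_introl (Hb z0))).
    exists (B, N `*` P) => /=; first by split => //; exists (N, P).
    by case=> t' [z x] /= [Bt' [Nz' Px']]; exact: hW.
  apply: (@sat_nbhs X Y T Z H z0 q0 U' (N1 `&` N2)
     ((setT `*` Q1°) `|` (P2° `*` setT))).
  + exact: filterI.
  + apply: openU; apply: openX'; by [exact: openT | exact: open_interior].
  + move=> p p' Op /asboolP [<-//|[_ [h|h]]].
      by right; split => //=; rewrite h.
    by left; split => //=; rewrite h.
  + by case: wq0 => h; [right | left]; split => //=; rewrite h.
  + move=> z [x t] [N1z' N2z'] [[_ /= /nbhs_singleton Qt]|[/= /nbhs_singleton Px _]].
      exact: (hQ (z, t)).
    exact: (hP (z, x)).
- have Wp0 : W (H z0 (repr q0).1, (repr q0).2) by exact: U'q.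
  have [N [P [B [Nz Px Bt hW]]]] := extract_nbhs cH oW Wp0.
  apply: (@sat_nbhs X Y T Z H z0 q0 U' N
     ((P° `&` ~` [set point]) `*` (B° `&` ~` [set point]))) => //.
  + by apply: openX'; apply: openI; by [exact: open_interior | exact: cl1].
  + move=> p p' Op /rel_nonwedge h; rewrite -h //.
    by case: Op => [[_ h1] [_ h2]] [].
  + by split; split => //= e; apply: wq0; [left|right].
  + move=> z [x t] Nz' [[/= /nbhs_singleton Px' _] [/nbhs_singleton Bt' _]].
    exact: hW.
Qed.
End SmashCont3.
Section Cor.
Variables (X Y T : ptopologicalType).
Hypotheses (hX : hausdorff_space X) (hT : hausdorff_space T)
  (cX : compact [set: X]) (cT : compact [set: T]).

Lemma smash_map_point (f : X -> Y) : f point = point ->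
  smash_map T f point = point.
Proof.
move=> fp; rewrite /smash_map pi_wedge //.
by case: ((repr_wedge (point : smash X T)).2 erefl) => h; [left; rewrite h | right].
Qed.

Lemma bmap_smash (f : X -> Y) : bmap f -> bmap (smash_map T f).
Proof.
case=> cf fp; split; last exact: smash_map_point.
have cH : continuous (fun zx : X * X => (fun _ : X => f) zx.1 zx.2).
  case=> z x; apply: (@continuous_comp _ _ _ snd f (z, x)); [exact: cvg_snd | exact: cf].
have := @smash_cont X Y T X (fun _ => f) hX hT cX cT cH (fun _ => fp).
move/continuous_curry => [_ /(_ point)].
by [].
Qed.

Lemma lc_X : locally_compact [set: X].
Proof.
move=> x _; exists setT; last by split => //; exact: closedT.
by rewrite withinET; exact: filterT.
Qed.

End Cor.
Module Cor2M.
Section Cor2.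
Variables (X Y T : ptopologicalType).
Hypotheses (hX : hausdorff_space X) (hT : hausdorff_space T)
  (cX : compact [set: X]) (cT : compact [set: T]).
Import ArrowAsCompactOpen.

Lemma smash_fun_cont (Z : topologicalType) (w : Z -> {compact-open, X -> Y}) :
  continuous w -> (forall z, bmap (w z)) ->
  continuous (fun z => (smash_map T (w z) : {compact-open, smash X T -> smash Y T})).
Proof.
move=> cw bw.
have cu : continuous (fun zx : Z * X => w zx.1 zx.2).
  have -> : (fun zx : Z * X => w zx.1 zx.2) = uncurry w by apply/funext => -[].
  exact: (@continuous_uncurry Z X Y w (lc_X cX) hX cw (fun z => (bw z).1)).
have := @smash_cont X Y T Z w hX hT cX cT cu (fun z => (bw z).2).
move/continuous_curry_fun.
by [].
Qed.
End Cor2.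
End Cor2M.
Section Cor3.
Variables (X Y T : ptopologicalType).
Hypotheses (hX : hausdorff_space X) (hT : hausdorff_space T)
  (cX : compact [set: X]) (cT : compact [set: T]).

Lemma I0 : unit_interval 0%R.
Proof. by rewrite /unit_interval /= lexx ler01. Qed.
Lemma I1 : unit_interval 1%R.
Proof. by rewrite /unit_interval /= lexx ler01. Qed.

Lemma path_comp_smash (a f : X -> Y) : bmap a -> path_comp a f ->
  path_comp (smash_map T a) (smash_map T f).
Proof.
move=> ba [g [cg g0 g1 bg]].
pose h : subspace unit_interval -> {compact-open, X -> Y} :=
  fun t => if pselect (unit_interval t) then g t else a.
have ch : continuous h.
  apply: (subspace_eq_continuous _ cg) => t; rewrite inE => It.
  by rewrite /h; case: pselect.
have bh : forall t, bmap (h t).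
  by move=> t; rewrite /h; case: pselect => // It; apply: bg.
exists (fun t : RR => (smash_map T (h t) : {compact-open, smash X T -> smash Y T})).
split.
- exact: (Cor2M.smash_fun_cont hX hT cX cT ch bh).
- have h0 : h 0%R = a.
    rewrite /h; destruct (pselect _) as [p|n]; [exact: g0 | by case: n; exact: I0].
  by rewrite h0.
- have h1 : h 1%R = f.
    rewrite /h; destruct (pselect _) as [p|n]; [exact: g1 | by case: n; exact: I1].
  by rewrite h1.
- by move=> t It; apply: (bmap_smash hX hT cX cT).
Qed.
End Cor3.
Local Open Scope ring_scope.

Section Csum.
Variable (M : choiceType).
Implicit Types (S : M -> int) (P Q : set M).

Lemma csum_seq S P (s : seq M) : uniq s -> (forall w, S w != 0 -> w \in s) ->
  csum S P = \sum_(w <- s | `[< P w >]) S w.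
Proof.
move=> us hs; rewrite (@bigfs int 0 +%R M s (fun w => `[< P w >]) S us); last first.
  by move=> i _ nis; apply/eqP; apply: contraNT nis; exact: hs.
rewrite /csum; congr (\sum_(i \in _) _); apply/funext => w /=.
apply/propext; change (P w <-> `[< P w >]); split; [move=> h; exact/asboolP | move/asboolP; done].
Qed.

Definition supp_seq S : seq M := finmap.enum_fset (fset_set [set w | S w != 0]).

Lemma supp_seqP S : fin_supp S -> forall w, (w \in supp_seq S) = (S w != 0).
Proof.
by move=> fs w; rewrite /supp_seq in_fset_set // mem_setE.
Qed.

Lemma supp_seq_uniq S : uniq (supp_seq S).
Proof. exact: finmap.fset_uniq. Qed.

Lemma csum_supp S P : fin_supp S ->
  csum S P = \sum_(w <- supp_seq S | `[< P w >]) S w.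
Proof.
move=> fs; apply: csum_seq; first exact: supp_seq_uniq.
by move=> w; rewrite supp_seqP.
Qed.

Lemma csum_eq S P Q : (forall w, S w != 0 -> (P w <-> Q w)) -> csum S P = csum S Q.
Proof.
move=> h; rewrite /csum fsbig_supp [in RHS]fsbig_supp; congr (\sum_(i \in _) _).
apply/funext => w /=; apply/propext.
have e : S w <> 0 -> (P w <-> Q w) by move=> nz; apply: h; apply/eqP.
by split => -[a b]; split => //; apply/(e b).
Qed.

Lemma csum0 S P : (forall w, P w -> S w = 0) -> csum S P = 0.
Proof. by move=> h; apply: fsbig1. Qed.

Lemma csum_nz S P : csum S P != 0 -> exists2 w, P w & S w != 0.
Proof.
move=> h; have := @fsbigN1 _ _ _ unit M P (fun _ w => S w) tt h.
by case=> w Pw Sw; exists w.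
Qed.

Lemma fin_supp_sub S (s : seq M) : (forall w, S w != 0 -> w \in s) -> fin_supp S.
Proof.
move=> h; apply: (@sub_finite_set _ _ [set` s]); last exact: finite_seq.
by move=> w /= /h.
Qed.

Lemma csumB S1 S2 P : fin_supp S1 -> fin_supp S2 ->
  csum (fun w => S1 w - S2 w) P = csum S1 P - csum S2 P.
Proof.
move=> f1 f2; pose s := undup (supp_seq S1 ++ supp_seq S2).
have us : uniq s by exact: undup_uniq.
have hs1 w : S1 w != 0 -> w \in s by rewrite mem_undup mem_cat supp_seqP // => ->.
have hs2 w : S2 w != 0 -> w \in s.
  by rewrite mem_undup mem_cat (supp_seqP f2) => ->; rewrite orbT.
rewrite (csum_seq _ us hs1) (csum_seq _ us hs2) (csum_seq _ us); last first.
  move=> w; case: (eqVneq (S1 w) 0) => [e|/hs1 //]; rewrite e sub0r oppr_eq0.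
  exact: hs2.
by rewrite -sumrB.
Qed.

Lemma csum_ind (w0 : M) P : csum (ind w0) P = if `[< P w0 >] then 1 else 0.
Proof.
rewrite (@csum_seq _ _ [:: w0]) //; last first.
  move=> w; rewrite /ind; destruct (pselect (w = w0)) as [e|ne] => /=.
    by rewrite e inE.
  by [].
rewrite big_cons big_nil /ind; destruct (pselect (w0 = w0)) as [e|ne] => //=.
Qed.

Lemma fin_supp_ind (w0 : M) : fin_supp (ind w0).
Proof.
apply: (@fin_supp_sub (ind w0) [:: w0]) => w; rewrite /ind.
destruct (pselect (w = w0)) as [e|ne] => /=.
  by rewrite e inE.
by [].
Qed.

End Csum.
Section Push.
Variables (M N : choiceType) (phi : M -> N).

Definition push (S : M -> int) : N -> int := fun n => csum S [set m | phi m = n].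

Lemma push_supp S : fin_supp S ->
  forall n, push S n != 0 -> n \in undup (map phi (supp_seq S)).
Proof.
move=> fs n /csum_nz [w /= e Sw]; rewrite mem_undup -e; apply: map_f.
by rewrite supp_seqP.
Qed.

Lemma fin_supp_push S : fin_supp S -> fin_supp (push S).
Proof. by move=> fs; apply: fin_supp_sub; exact: push_supp. Qed.

Lemma csum_push S (P : set N) : fin_supp S ->
  csum (push S) P = csum S (phi @^-1` P).
Proof.
move=> fs; rewrite (csum_seq _ (undup_uniq _) (push_supp fs)) (csum_supp _ fs).
under eq_bigr => n _ do rewrite /push (csum_supp _ fs).
rewrite (exchange_big_dep xpredT) //=.
rewrite [RHS]big_mkcond /= [LHS]big_seq [RHS]big_seq; apply: eq_bigr => w ws.
have wu : phi w \in undup (map phi (supp_seq S)).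
  by rewrite mem_undup; apply: map_f.
rewrite (big_rem _ wu) /= big1_seq ?addr0.
  by case: asboolP => Pw; case: asboolP.
move=> n /andP [/andP [_ /asboolP e]]; rewrite -e.
by rewrite mem_rem_uniqF // undup_uniq.
Qed.
End Push.
Lemma fin_suppB (M : choiceType) (S1 S2 : M -> int) : fin_supp S1 -> fin_supp S2 ->
  fin_supp (fun w => S1 w - S2 w).
Proof.
move=> f1 f2; apply: (@fin_supp_sub _ _ (supp_seq S1 ++ supp_seq S2)) => w.
rewrite mem_cat (supp_seqP f1) (supp_seqP f2).
by case: (eqVneq (S1 w) 0) => [->|//]; rewrite sub0r oppr_eq0 => ->; rewrite orbT.
Qed.

Lemma path_bmap (X Y : ptopologicalType) (a f : X -> Y) : path_comp a f -> bmap f.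
Proof. by case=> g [_ _ <- bg]; apply: bg; exact: I1. Qed.

Lemma face_disj (E : finType) (A : {set {set E}}) (F F' : {set E}) (p : simplex E) :
  layout A -> F \in A -> F' \in A -> faceD F p -> faceD F' p -> F = F'.
Proof.
move=> [_ dA] FA F'A [p0 s1 hF] [_ _ hF']; apply/eqP; apply: contraT => nFF'.
have z : forall e, set_val p e = 0%R.
  move=> e; case: (boolP (e \in F)) => eF; last exact: hF.
  apply: hF'; apply/negP => eF'.
  by have := dA F F' FA F'A nFF'; move/setP/(_ e); rewrite !inE eF eF'.
move: s1; rewrite (eq_bigr (fun _ => 0%R)) ?big1 //.
by move/eqP; rewrite eq_sym oner_eq0.
Qed.

Section Main.
Variables (X Y T : ptopologicalType) (E : finType) (a : X -> Y).

Definition Phi (w : gen X Y E) : gen (smash X T) (smash Y T) E :=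
  fun p => smash_map T (w p).

Lemma nonwedge_repr (q : smash X T) : q <> point ->
  (repr q).1 <> point /\ (repr q).2 <> point.
Proof.
move=> qn; split => e; apply: qn; apply/(repr_wedge q).1; by [left|right].
Qed.

Lemma smash_inj (t0 : T) (f1 f2 : X -> Y) : t0 <> point ->
  f1 point = point -> f2 point = point ->
  smash_map T f1 = smash_map T f2 -> f1 = f2.
Proof.
move=> t0n p1 p2 e; apply/funext => x.
case: (pselect (x = point)) => [->|xn]; first by rewrite p1 p2.
have := congr1 (fun f => f (\pi_(smash X T) (x, t0))) e; rewrite /smash_map /=.
have r : (x, t0) = repr (\pi_(smash X T) (x, t0)).
  by apply: rel_nonwedge; [exact: repr_rel | case].
by rewrite -r; apply: pi_inj_snd.
Qed.

Lemma fissile_push (S : gen X Y E -> int) :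
  fin_supp S -> supported_in (is_map_into (path_comp a)) S ->
  fissile (path_comp a) S ->
  fissile (path_comp (smash_map T a)) (push Phi S).
Proof.
move=> fS sS fisS.
case: (pselect (exists t0 : T, t0 <> point)) => [[t0 t0n]|triv].
  move=> A lA g' hg'.
  rewrite csum_push //; under eq_bigr => F _ do rewrite csum_push //.
  case: (pselect (forall F, F \in A -> exists w, S w != 0 /\
       agree_on (faceD F) (Phi w) g')) => [hall|hnot]; last first.
    move/existsNP: hnot => [F /not_implyP [FA /forallNP nw]].
    have z : csum S (Phi @^-1` [set w' | agree_on (faceD F) w' g']) = 0.
      apply: csum0 => w /= ag; case: (eqVneq (S w) 0) => // nz; case: (nw w); split => //.
    rewrite (big_setD1 F FA) /= z mul0r.
    apply: csum0 => w /= ag; case: (eqVneq (S w) 0) => // nz; case: (nw w).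
    by split => //; exact: ag.
  have [wF hwF] : {wF : {set E} -> gen X Y E & forall F, F \in A ->
      S (wF F) != 0 /\ agree_on (faceD F) (Phi (wF F)) g'}.
    apply: (@choice _ _ (fun F w => F \in A ->
      S w != 0 /\ agree_on (faceD F) (Phi w) g')) => F.
    case: (pselect (F \in A)) => [FA|nFA].
      by have [w hw] := hall F FA; exists w.
    by exists (fun _ => a) => /nFA.
  have [fo hfo] : {fo : simplex E -> {set E} & forall p,
      (exists F, F \in A /\ faceD F p) -> fo p \in A /\ faceD (fo p) p}.
    apply: (@choice _ _ (fun p F => (exists F, F \in A /\ faceD F p) ->
      F \in A /\ faceD F p)) => p.
    case: (pselect (exists F, F \in A /\ faceD F p)) => [[F hF]|nF].
      by exists F.
    by exists finset.set0.
  pose g : gen X Y E := fun p => wF (fo p) p.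
  have gF : forall F, F \in A -> agree_on (faceD F) (wF F) g.
    move=> F FA p Fp; rewrite /g.
    have [h1 h2] := hfo p (ex_intro _ F (conj FA Fp)).
    by rewrite (face_disj lA h1 FA h2 Fp).
  have bm : forall w p, S w != 0 -> bmap (w p).
    by move=> w p Sw; have [_ pw] := sS w Sw; exact: path_bmap (pw p).
  have key : forall F w, F \in A -> S w != 0 ->
      (agree_on (faceD F) (Phi w) g' <-> agree_on (faceD F) w g).
    move=> F w FA Sw; have [SwF agF] := hwF F FA; split.
      move=> ag p Fp; rewrite -(gF F FA p Fp).
      apply: (smash_inj t0n (bm w p Sw).2 (bm _ p SwF).2).
      by have := ag p Fp; have := agF p Fp; rewrite /Phi => -> ->.
    move=> ag p Fp; rewrite -(agF p Fp) /Phi.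
    by rewrite (ag p Fp) (gF F FA p Fp).
  have -> : csum S (Phi @^-1` [set w' | forall F, F \in A ->
      agree_on (faceD F) w' g']) =
      csum S [set w | forall F, F \in A -> agree_on (faceD F) w g].
    apply: csum_eq => w Sw /=; split => h F FA.
      exact: (key F w FA Sw).1 (h F FA).
    exact: (key F w FA Sw).2 (h F FA).
  have -> : \prod_(F in A) csum S (Phi @^-1` [set w' | agree_on (faceD F) w' g'])
      = \prod_(F in A) csum S [set w | agree_on (faceD F) w g].
    by apply: eq_bigr => F FA; apply: csum_eq => w Sw /=; apply: key.
  apply: fisS => // F FA; have [cwF pwF] := sS _ (hwF F FA).1; split.
    have cs : {within faceD F, continuous (wF F)} by exact: continuous_subspaceT.
    apply: (subspace_eq_continuous _ cs).
    by move=> p; rewrite inE => Fp; exact: gF F FA p Fp.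
  by move=> p Fp; rewrite -(gF F FA p Fp); exact: pwF.
have tp : forall t : T, t = point.
  by move=> t; case: (pselect (t = point)) => // h; case: triv; exists t.
have allpt : forall q : smash Y T, q = point.
  by move=> q; apply/(repr_wedge q).1; right; exact: tp.
have allG : forall w1 w2 : gen (smash X T) (smash Y T) E, w1 = w2.
  move=> w1 w2; apply/funext => p; apply/funext => q.
  by rewrite (allpt (w1 p q)) (allpt (w2 p q)).
have tot : csum (push Phi S) setT = 1.
  rewrite csum_push //.
  have L0 : layout (finset.set0 : {set {set E}}) by split => [F|F G]; rewrite finset.in_set0.
  have h := fisS finset.set0 L0 (fun _ => a).
  rewrite big_set0 in h; rewrite -h; last by move=> F; rewrite finset.in_set0.
  by apply: csum_eq => w _ /=; split => // _ F; rewrite finset.in_set0.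
move=> A lA g' hg'.
have e1 : forall P : set (gen (smash X T) (smash Y T) E), P g' -> P = setT.
  move=> P Pg; apply/funext => w'; apply/propext; split => // _.
  by rewrite (allG w' g').
rewrite (e1 [set w' | forall F, F \in A -> agree_on (faceD F) w' g']);
  last by move=> F _ p _.
rewrite tot big1 // => F _.
by rewrite (e1 [set w' | agree_on (faceD F) w' g']).
Qed.

End Main.
Section Main2.
Variables (X Y T : ptopologicalType) (E : finType) (b : X -> Y).

Lemma in_filt_push (r : nat) (S : gen X Y E -> int) : fin_supp S ->
  in_filt r.+1 (fun w => ind (fun _ => b) w - S w) ->
  in_filt r.+1 (fun w' => ind (fun _ => smash_map T b) w' - push (@Phi X Y T E) S w').
Proof.
move=> fS filtS l' sl' hl' w0'.
pose V := fun w : gen X Y E => ind (fun _ => b) w - S w.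
have fV : fin_supp V by apply: fin_suppB => //; exact: fin_supp_ind.
have eqV : (fun w' => ind (fun _ => smash_map T b) w' - push (@Phi X Y T E) S w')
    = push (@Phi X Y T E) V.
  apply/funext => w'; rewrite /push csumB //; last exact: fin_supp_ind.
  rewrite csum_ind; congr (_ - _); rewrite /ind.
  destruct (pselect (w' = fun _ => smash_map T b)) as [e|ne] => /=.
    by rewrite e; case: asboolP.
  by case: asboolP => // e; case: ne; rewrite -e.
rewrite eqV csum_push //.
case: (pselect (exists w1, (@Phi X Y T E @^-1`
    [set w | forall ux, List.In ux l' -> w ux.1 ux.2 = w0' ux.1 ux.2]) w1))
    => [[w1 hw1]|nw]; last first.
  by apply: csum0 => w hw; case: nw; exists w.
pose l := map (fun ux : simplex E * smash X T => (ux.1, (repr ux.2).1)) l'.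
have -> : @Phi X Y T E @^-1`
    [set w | forall ux, List.In ux l' -> w ux.1 ux.2 = w0' ux.1 ux.2] =
    [set w | forall ux, List.In ux l -> w ux.1 ux.2 = w1 ux.1 ux.2].
  apply/funext => w; apply/propext; split.
    move=> hw ux /List.in_map_iff [vx [<- vxl]] /=.
    have h1 := hw vx vxl; have h2 := hw1 vx vxl; rewrite -h2 in h1.
    have [_ tn] := nonwedge_repr (hl' vx vxl).
    exact: (pi_inj_snd tn h1).
  move=> hw vx vxl; rewrite -(hw1 vx vxl) /Phi /smash_map.
  rewrite (hw (vx.1, (repr vx.2).1)) //.
  by apply/List.in_map_iff; exists vx.
apply: filtS.
- by rewrite /l size_map.
- move=> ux /List.in_map_iff [vx [<- vxl]] /=.
  by have [] := nonwedge_repr (hl' vx vxl).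
Qed.
End Main2.

Unset Implicit Arguments.
Local Close Scope ring_scope.
Local Close Scope quotient_scope.

Theorem corollary5p3 (X Y T : ptopologicalType) (r : nat) (a b : X -> Y) :
  cellular X -> cellular Y -> cellular T ->
  compact [set: X] -> compact [set: T] ->
  bmap a -> bmap b ->
  r_approx r a b ->
  r_approx r (smash_map T a) (smash_map T b).
Proof.
move=> [hX _] _ [hT _] cX cT ba bb hr E E0.
have [S [fS sS fisS filtS]] := hr E E0.
exists (push (@Phi X Y T E) S); split.
- exact: fin_supp_push.
- move=> w' /csum_nz [w /= e Sw]; rewrite -e.
  have [cw pw] := sS w Sw; split.
    exact: (Cor2M.smash_fun_cont hX hT cX cT cw (fun p => path_bmap (pw p))).
  by move=> p; exact: (path_comp_smash hX hT cX cT ba (pw p)).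
- exact: fissile_push.
- exact: in_filt_push.
Qed.
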